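(* Let $B_n$ be the number of bidirectional ballot sequences of length $n$. Then $B_n=\Theta(2^n/n)$ as $n\to\infty$.
   Context: A 0-1 sequence of length $n$ is a bidirectional ballot sequence if every nonempty prefix and every nonempty suffix of it contains strictly more 1's than 0's. $f=\Theta(g)$ means there are positive constants $c,C$ with $cg(n)\le f(n)\le Cg(n)$ for all sufficiently large $n$. *)

(* Defs.v *)
From mathcomp Require Import all_boot all_order all_algebra.
Set Implicit Arguments. Unset Strict Implicit. Unset Printing Implicit Defensive.

(* A 0-1 sequence is a seq bool; true = 1, false = 0. *)
Definition more_ones (s : seq bool) : bool :=
  count_mem false s < count_mem true s.

Definition bidir_ballot (s : seq bool) : bool :=
  [forall k : 'I_(size s).+1, (0 < k) ==> more_ones (take k s)] &&
  [forall k : 'I_(size s), more_ones (drop k s)].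

Definition B (n : nat) : nat :=
  #|[set t : n.-tuple bool | bidir_ballot (tval t)]|.

(* Main.v *)
Require Import Defs.
From mathcomp Require Import all_boot all_order all_algebra.
From mathcomp Require Import zify ring lra.
Import Order.TTheory GRing.Theory Num.Theory.
Set Implicit Arguments. Unset Strict Implicit. Unset Printing Implicit Defensive.

Fixpoint alls (n : nat) : seq (seq bool) :=
  if n is m.+1 then map (cons false) (alls m) ++ map (cons true) (alls m)
  else [:: [::]].

Lemma count_allsS (P : pred (seq bool)) n :
  count P (alls n.+1) = count (fun s => P (false :: s)) (alls n)
                      + count (fun s => P (true :: s)) (alls n).
Proof. by rewrite /= count_cat !count_map. Qed.

Lemma mem_alls n x : (x \in alls n) = (size x == n).
Proof.
have inj (b : bool) : injective (cons b) by move=> ? ? [].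
elim: n x => [|n IH] [|b x] //=.
- apply/negbTE; rewrite mem_cat negb_or.
  by apply/andP; split; apply/mapP => [[y _]].
- rewrite mem_cat; case: b.
  + rewrite mem_map // IH eqSS.
    have -> : (true :: x \in [seq false :: i | i <- alls n]) = false
      by apply/negbTE/mapP => [[y _ []]].
    by [].
  + rewrite mem_map // IH eqSS.
    have -> : (false :: x \in [seq true :: i | i <- alls n]) = false
      by apply/negbTE/mapP => [[y _ []]].
    by rewrite orbF.
Qed.

Lemma uniq_alls n : uniq (alls n).
Proof.
elim: n => [|n IH] //=.
rewrite cat_uniq !map_inj_uniq ?IH //; try (by move=> ? ? []).
rewrite andbT /=; apply/hasPn => x /mapP [y _ ->].
by apply/mapP => [[z _]].
Qed.

Lemma B_count n : B n = count bidir_ballot (alls n).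
Proof.
rewrite /B cardE -size_filter -(size_map val).
apply/perm_size/uniq_perm.
- by rewrite map_inj_uniq ?enum_uniq //; apply: val_inj.
- by apply: filter_uniq; apply: uniq_alls.
move=> x; rewrite mem_filter mem_alls.
apply/mapP/idP.
- by move=> [t]; rewrite mem_enum inE => H ->; rewrite H size_tuple eqxx.
- move=> /andP [Hb /eqP Hs].
  have Ht : size x == n by rewrite Hs.
  exists (Tuple Ht) => //; by rewrite mem_enum inE.
Qed.


Definition PP (s : seq bool) := all (fun k => more_ones (take k s)) (iota 1 (size s)).
Definition PS (s : seq bool) := all (fun k => more_ones (drop k s)) (iota 0 (size s)).

Lemma bb_eq s : bidir_ballot s = PP s && PS s.
Proof.
rewrite /bidir_ballot /PP /PS; congr andb.
- apply/forallP/allP.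
  + move=> H k; rewrite mem_iota => /andP [k1 k2].
    have k3 : k < (size s).+1 by lia.
    by move: (H (Ordinal k3)) => /= /implyP; apply.
  + move=> H k; apply/implyP => k0; apply: H; rewrite mem_iota.
    by have := ltn_ord k; lia.
- apply/forallP/allP.
  + move=> H k; rewrite mem_iota => /andP [k1 k2].
    have k3 : k < size s by lia.
    exact: (H (Ordinal k3)).
  + move=> H k; apply: H; rewrite mem_iota.
    by have := ltn_ord k; lia.
Qed.

Lemma mo_rev t : more_ones (rev t) = more_ones t.
Proof. by rewrite /more_ones !count_rev. Qed.

Lemma PS_rev s : PS s = PP (rev s).
Proof.
rewrite /PS /PP size_rev; apply/allP/allP.
- move=> H k; rewrite mem_iota => /andP [k1 k2].
  rewrite take_rev mo_rev; apply: H; rewrite mem_iota; lia.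
- move=> H k; rewrite mem_iota => /andP [k1 k2].
  have := H (size s - k); rewrite take_rev mo_rev.
  have -> : size s - (size s - k) = k by lia.
  apply; rewrite mem_iota; lia.
Qed.

Lemma count_PS n : count PS (alls n) = count PP (alls n).
Proof.
rewrite (eq_count PS_rev).
have -> : count (fun s => PP (rev s)) (alls n) = count PP (map rev (alls n)).
  by rewrite count_map.
suff /permP -> : perm_eq (map rev (alls n)) (alls n) by [].
apply/uniq_perm.
- by rewrite map_inj_uniq ?uniq_alls //; exact: (can_inj revK).
- exact: uniq_alls.
move=> x; apply/mapP/idP.
- by move=> [y]; rewrite mem_alls => H ->; rewrite mem_alls size_rev.
- by move=> H; exists (rev x); rewrite ?revK // mem_alls size_rev -mem_alls.
Qed.

Notation leb_seq x y := (all2 implb x y).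

Lemma leb_size x y : leb_seq x y -> size x = size y.
Proof. by elim: x y => [|a x IH] [|b y] //= /andP [_ /IH ->]. Qed.

Lemma leb_take k x y : leb_seq x y -> leb_seq (take k x) (take k y).
Proof.
elim: x y k => [|a x IH] [|b y] [|k] //= /andP [H1 H2].
by apply/andP; split => //; apply: IH.
Qed.

Lemma leb_drop k x y : leb_seq x y -> leb_seq (drop k x) (drop k y).
Proof.
elim: x y k => [|a x IH] [|b y] [|k] //= /andP [H1 H2]; exact: IH.
Qed.

Lemma leb_mo x y : leb_seq x y -> more_ones x -> more_ones y.
Proof.
rewrite /more_ones.
suff H : leb_seq x y -> count_mem true x <= count_mem true y /\
                        count_mem false y <= count_mem false x.
  by move=> /H [H1 H2] H3; lia.
elim: x y => [|a x IH] [|b y] //= /andP [H1 /IH [H2 H3]].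
by case: a b H1 => [] [] //= _; rewrite ?add0n ?add1n; split;
  rewrite ?ltnS //; apply: leq_trans (leqnSn _).
Qed.

Lemma leb_PP x y : leb_seq x y -> PP x -> PP y.
Proof.
move=> H /allP Hx; apply/allP => k; rewrite -(leb_size H) => /Hx.
by apply: leb_mo; apply: leb_take.
Qed.

Lemma leb_PS x y : leb_seq x y -> PS x -> PS y.
Proof.
move=> H /allP Hx; apply/allP => k; rewrite -(leb_size H) => /Hx.
by apply: leb_mo; apply: leb_drop.
Qed.

Lemma leb_refl x : leb_seq x x.
Proof. by elim: x => //= a x ->; case: a. Qed.


Definition monot (A : pred (seq bool)) := forall x y, leb_seq x y -> A x -> A y.

Lemma harris_arith a0 a1 c0 c1 i0 i1 X : a0 * c0 <= X * i0 -> a1 * c1 <= X * i1 ->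
  a0 <= a1 -> c0 <= c1 -> (a0 + a1) * (c0 + c1) <= 2 * X * (i0 + i1).
Proof.
move=> h0 h1 la lc.
have [da Ea] : exists da, a1 = a0 + da by exists (a1 - a0); lia.
have [dc Ec] : exists dc, c1 = c0 + dc by exists (c1 - c0); lia.
subst a1 c1.
have : (a0 + (a0 + da)) * (c0 + (c0 + dc)) <= 2 * (a0 * c0 + (a0 + da) * (c0 + dc)) by nia.
nia.
Qed.

Lemma harris n : forall (A C : pred (seq bool)), monot A -> monot C ->
  count A (alls n) * count C (alls n) <= 2 ^ n * count (fun s => A s && C s) (alls n).
Proof.
elim: n => [|n IH] A C hA hC.
  by rewrite /=; case: (A [::]); case: (C [::]).
rewrite !count_allsS /=.
have mA b : monot (fun s => A (b :: s)).
  by move=> x y H; apply: hA; rewrite /= H andbT; case: b.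
have mC b : monot (fun s => C (b :: s)).
  by move=> x y H; apply: hC; rewrite /= H andbT; case: b.
have h0 := IH _ _ (mA false) (mC false).
have h1 := IH _ _ (mA true) (mC true).
have la : count (fun s => A (false :: s)) (alls n) <= count (fun s => A (true :: s)) (alls n).
  by apply: sub_count => s; apply: hA; rewrite /= leb_refl.
have lc : count (fun s => C (false :: s)) (alls n) <= count (fun s => C (true :: s)) (alls n).
  by apply: sub_count => s; apply: hC; rewrite /= leb_refl.
move: h0 h1 la lc.
set a0 := count (fun s => A (false :: s)) (alls n).
set a1 := count (fun s => A (true :: s)) (alls n).
set c0 := count (fun s => C (false :: s)) (alls n).
set c1 := count (fun s => C (true :: s)) (alls n).
set i0 := count _ (alls n).
set i1 := count _ (alls n).
move=> h0 h1 la lc.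
rewrite expnS; exact: harris_arith.
Qed.

Lemma count_split (C : pred (seq bool)) a b : forall (A : pred (seq bool)),
  count (fun s => A (take a s) && C (drop a s)) (alls (a + b))
  = count A (alls a) * count C (alls b).
Proof.
elim: a => [|a IH] A.
  rewrite add0n /= addn0 -(eq_count (a1 := fun s => A [::] && C s)); last first.
    by move=> s; rewrite take0 drop0.
  case: (A [::]).
  - by rewrite mul1n.
  - by rewrite mul0n count_pred0.
rewrite addSn count_allsS /=.
rewrite (IH (fun t => A (false :: t))) (IH (fun t => A (true :: t))).
by rewrite count_allsS mulnDl.
Qed.

Lemma bb_split a s : bidir_ballot s -> PP (take a s) && PS (drop a s).
Proof.
rewrite bb_eq => /andP [/allP H1 /allP H2]; apply/andP; split.
- apply/allP => k; rewrite mem_iota size_take_min => /andP [k1 k2].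
  rewrite take_takel; last by lia.
  apply: H1; rewrite mem_iota; lia.
- apply/allP => k; rewrite mem_iota size_drop => /andP [k1 k2].
  rewrite drop_drop; apply: H2; rewrite mem_iota; lia.
Qed.

Lemma B_upper a b : B (a + b) <= count PP (alls a) * count PP (alls b).
Proof.
rewrite B_count -(count_PS b) -(count_split PS a b PP).
by apply: sub_count => s; apply: bb_split.
Qed.

Lemma B_lower n : count PP (alls n) * count PP (alls n) <= 2 ^ n * B n.
Proof.
rewrite B_count -{2}count_PS (eq_count bb_eq).
apply: harris => x y; [exact: leb_PP | exact: leb_PS].
Qed.

Local Open Scope ring_scope.

Definition ht (s : seq bool) : int := (count_mem true s)%:Z - (count_mem false s)%:Z.
Definition eb (b : bool) : int := if b then 1 else -1.

Lemma ht_cons b s : ht (b :: s) = eb b + ht s.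
Proof. rewrite /ht /eb; case: b => /=; lia. Qed.

Lemma ht_nil : ht [::] = 0. Proof. by []. Qed.

Definition PPh (h : int) (s : seq bool) :=
  all (fun k => 0 < h + ht (take k s)) (iota 1 (size s)).

Lemma PP_PPh s : PP s = PPh 0 s.
Proof.
rewrite /PP /PPh; apply: eq_all => k; rewrite add0r /more_ones /ht; lia.
Qed.

Lemma PPh_cons h b s : PPh h (b :: s) = (0 < h + eb b) && PPh (h + eb b) s.
Proof.
rewrite /PPh /= take0 ht_cons ht_nil addr0; congr andb.
rewrite -[2%N]/(1 + 1)%N iotaDl all_map; apply: eq_all => k /=.
by rewrite ht_cons addrA.
Qed.

Lemma count_add4 (T : Type) (P Q R S : pred T) l :
  (forall x, P x + Q x = R x + S x)%N ->
  (count P l + count Q l = count R l + count S l)%N.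
Proof.
move=> H; elim: l => //= x l IH.
have := H x; lia.
Qed.

Lemma cnt n : forall h : int, 0 <= h ->
  count (PPh (h + 1)) (alls n) = count (fun s => (- h <= ht s <= h + 1)) (alls n).
Proof.
elim: n => [|n IH] h h0.
  by rewrite /= /PPh /= ht_nil; lia.
rewrite !count_allsS.
under eq_count => s do rewrite PPh_cons.
under [X in (_ + X)%N]eq_count => s do rewrite PPh_cons.
under [in RHS]eq_count => s do rewrite ht_cons.
under [X in (_ = _ + X)%N]eq_count => s do rewrite ht_cons.
rewrite /eb.
have E2 : count (fun s => (0 < h + 1 + 1) && PPh (h + 1 + 1) s) (alls n)
        = count (fun s => (- (h + 1) <= ht s <= h + 1 + 1)) (alls n).
  rewrite -IH; last by lia.
  have -> : (0 < h + 1 + 1) = true by lia.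
  by apply: eq_count => s.
rewrite E2.
have [->|hp] := eqVneq h 0.
  rewrite (@eq_count _ _ pred0); last first.
    by move=> s.
  rewrite count_pred0 add0n.
  rewrite -[LHS]addn0 -(count_pred0 (alls n)).
  apply: count_add4 => x /=; lia.
have E1 : count (fun s => (0 < h + 1 + -1) && PPh (h + 1 + -1) s) (alls n)
        = count (fun s => (- (h - 1) <= ht s <= h - 1 + 1)) (alls n).
  rewrite -IH; last by lia.
  have -> : (0 < h + 1 + -1) = true by lia.
  by apply: eq_count => s; rewrite addrK subrK.
rewrite E1; apply: count_add4 => x /=; lia.
Qed.

Lemma count_tf (s : seq bool) : (count_mem true s + count_mem false s)%N = size s.
Proof. by elim: s => //= [[]] s IH /=; lia. Qed.

Lemma count_bin m t : count (fun s => count_mem true s == t) (alls m) = 'C(m, t).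
Proof.
elim: m t => [|m IH] t.
  by case: t.
rewrite count_allsS /=.
case: t => [|t].
  rewrite (@eq_count _ (fun s => 1 + count_mem true s == 0)%N pred0) ?count_pred0; last first.
    by move=> s; rewrite add1n.
  by rewrite addn0 bin0 -(bin0 m) -(IH 0); apply: eq_count => s; rewrite add0n.
rewrite binS -!IH; congr addn; apply: eq_count => s /=; by rewrite ?add0n ?add1n ?eqSS.
Qed.

Lemma PP_count m : count PP (alls m.+1) = 'C(m, (m.+1) %/ 2).
Proof.
rewrite (eq_count PP_PPh) count_allsS.
rewrite (@eq_count _ (fun s => PPh 0 (false :: s)) pred0); last first.
  by move=> s; rewrite PPh_cons.
rewrite count_pred0 add0n.
rewrite (@eq_count _ (fun s => PPh 0 (true :: s)) (PPh (0 + 1))); last first.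
  by move=> s; rewrite PPh_cons.
rewrite cnt // -count_bin.
apply: eq_in_count => s; rewrite mem_alls => /eqP Hs.
have := count_tf s; rewrite /ht Hs; lia.
Qed.

Local Close Scope ring_scope.

Lemma d_eq k : k.+1 * 'C(k.*2.+1, k.+1) = k.*2.+1 * 'C(k.*2, k).
Proof. by rewrite -mul_bin_diag. Qed.

Lemma c_eq k : 'C(k.+1.*2, k.+1) = 2 * 'C(k.*2.+1, k.+1).
Proof.
rewrite doubleS binS.
have -> : 'C(k.*2.+1, k) = 'C(k.*2.+1, k.+1).
  rewrite -bin_sub; last by lia.
  by congr binomial; lia.
lia.
Qed.

Lemma c_rec k : k.+1 * 'C(k.+1.*2, k.+1) = 2 * k.*2.+1 * 'C(k.*2, k).
Proof. rewrite c_eq mulnCA d_eq; lia. Qed.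

Lemma c_bounds k : 16 ^ k <= (4 * k + 1) * 'C(k.*2, k) ^ 2 /\
                   (3 * k + 1) * 'C(k.*2, k) ^ 2 <= 16 ^ k.
Proof.
elim: k => [|k [IH1 IH2]]; first by [].
have R := c_rec k.
move: IH1 IH2 R.
set c := 'C(k.*2, k); set c' := 'C(k.+1.*2, k.+1); set X := 16 ^ k.
move=> IH1 IH2 R; rewrite [16 ^ k.+1]expnS -/X.
have Hp : 0 < k.+1 ^ 2 by rewrite expn_gt0.
have E : (k.+1 ^ 2 * c' ^ 2 = 4 * (k.*2.+1) ^ 2 * c ^ 2) by rewrite -expnMn R; lia.
split.
- suff : k.+1 ^ 2 * (16 * X) <= k.+1 ^ 2 * ((4 * k.+1 + 1) * c' ^ 2).
    by rewrite (leq_pmul2l Hp).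
  have -> : k.+1 ^ 2 * ((4 * k.+1 + 1) * c' ^ 2) = (4 * k.+1 + 1) * (k.+1 ^ 2 * c' ^ 2) by lia.
  rewrite E.
  have H : 4 * (k.+1 ^ 2) * (4 * k + 1) <= (4 * k.+1 + 1) * (k.*2.+1) ^ 2 by nia.
  nia.
- suff : k.+1 ^ 2 * ((3 * k.+1 + 1) * c' ^ 2) <= k.+1 ^ 2 * (16 * X).
    by rewrite (leq_pmul2l Hp).
  have -> : k.+1 ^ 2 * ((3 * k.+1 + 1) * c' ^ 2) = (3 * k.+1 + 1) * (k.+1 ^ 2 * c' ^ 2) by lia.
  rewrite E.
  have H : (3 * k.+1 + 1) * (k.*2.+1) ^ 2 <= 4 * (k.+1 ^ 2) * (3 * k + 1) by nia.
  nia.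
Qed.

Lemma pow4_double k : 4 ^ k.*2 = 16 ^ k.
Proof. by rewrite -mul2n expnM. Qed.

Lemma P_bounds n : 0 < n ->
  4 ^ n <= 12 * n * count PP (alls n) ^ 2 /\ n * count PP (alls n) ^ 2 <= 4 ^ n.
Proof.
case: n => [|m] // _.
rewrite PP_count.
have [k [->|->]] : exists k, m = k.*2 \/ m = k.*2.+1.
  exists m./2; rewrite -{1 3}(odd_double_half m); case: (odd m); [right|left]; lia.
- have -> : (k.*2.+1 %/ 2) = k by lia.
  have [H1 H2] := c_bounds k.
  rewrite expnS pow4_double.
  move: H1 H2; set c := 'C(k.*2, k); set X := 16 ^ k => H1 H2.
  split; nia.
- have -> : (k.*2.+2 %/ 2) = k.+1 by lia.
  have [H1 H2] := c_bounds k.+1.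
  rewrite c_eq in H1 H2.
  have -> : k.*2.+2 = k.+1.*2 by lia.
  rewrite pow4_double.
  move: H1 H2; set d := 'C(k.*2.+1, k.+1); set X := 16 ^ k.+1 => H1 H2.
  split; nia.
Qed.


Lemma lower_nat n : 0 < n -> 2 ^ n <= 12 * n * B n.
Proof.
move=> n0; have [L _] := P_bounds n0.
have H := B_lower n.
have E : 4 ^ n = 2 ^ n * 2 ^ n by rewrite -expnMn.
have : 2 ^ n * 2 ^ n <= 2 ^ n * (12 * n * B n).
  rewrite -E; apply: (leq_trans L).
  move: H; set P := count PP (alls n); set X := 2 ^ n => H; nia.
by rewrite leq_pmul2l ?expn_gt0.
Qed.

Lemma upper_nat n : 1 < n -> n * B n <= 3 * 2 ^ n.
Proof.
move=> n1.
set a := n %/ 2; set b := n - a.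
have a0 : 0 < a by lia.
have b0 : 0 < b by lia.
have Hn : n = a + b by lia.
have [_ Ua] := P_bounds a0.
have [_ Ub] := P_bounds b0.
have HB := B_upper a b.
rewrite -Hn in HB.
have Hab : n ^ 2 <= 5 * (a * b) by rewrite Hn; nia.
rewrite -leq_sqr.
have E : (3 * 2 ^ n) ^ 2 = 9 * 4 ^ a * 4 ^ b.
  by rewrite expnMn expnAC {1}Hn expnD mulnA.
rewrite E.
move: Ua Ub HB; set Pa := count PP (alls a); set Pb := count PP (alls b).
set Xa := 4 ^ a; set Xb := 4 ^ b; set Bn := B n => Ua Ub HB.
have H1 : Bn ^ 2 <= Pa ^ 2 * Pb ^ 2 by rewrite -expnMn leq_sqr.
have H2 : (a * b) * (Pa ^ 2 * Pb ^ 2) <= Xa * Xb.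
  have -> : (a * b) * (Pa ^ 2 * Pb ^ 2) = (a * Pa ^ 2) * (b * Pb ^ 2) by lia.
  exact: leq_mul.
rewrite expnMn.
have H3 : n ^ 2 * Bn ^ 2 <= 5 * (a * b) * (Pa ^ 2 * Pb ^ 2) by apply: leq_mul.
nia.
Qed.

Local Open Scope ring_scope.

Theorem proposition4 :
  exists (c C : rat) (N : nat), 0 < c /\ 0 < C /\
    forall n : nat, (N <= n)%N ->
      c * (2 ^+ n) / n%:R <= (B n)%:R /\ (B n)%:R <= C * (2 ^+ n) / n%:R.
Proof.
exists (1 / 12), 3, 2%N; split; first by [].
split; first by [].
move=> n n2.
have n0 : (0 < n)%N by lia.
have L := lower_nat n0.
have U := upper_nat n2.
have np : (0 : rat) < n%:R by rewrite ltr0n.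
split.
- rewrite ler_pdivrMr //.
  have : ((2 ^ n)%N%:R <= (12 * n * B n)%N%:R :> rat) by rewrite ler_nat.

  rewrite (natrX rat) !natrM; lra.
- rewrite ler_pdivlMr //.
  have : ((n * B n)%N%:R <= (3 * 2 ^ n)%N%:R :> rat) by rewrite ler_nat.
  rewrite !natrM natrX; lra.
Qed.
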